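(* Let $f(x,y) = \frac{xy}{x+y+1}$ for $x,y\ge0$. Let $a,b$ be nonnegative random variables, $\rho>0$ and $r\in\mathbb R$. Then $$\Pr\bigl(f(\rho a,\rho b)\le\rho^{2r}\bigr) \le \Pr\Bigl(\min(a,b)\le \rho^{2r-1}+\rho^{r-1}\sqrt{1+\rho^{2r}}\Bigr).$$ *)

(* Defs.v *)
From HB Require Import structures.
From mathcomp Require Import all_boot all_order all_algebra.
From mathcomp Require Import all_classical all_reals all_analysis.
Set Implicit Arguments. Unset Strict Implicit. Unset Printing Implicit Defensive.
Import Order.TTheory GRing.Theory Num.Theory.
Local Open Scope ring_scope.

Definition fxy {R : realType} (x y : R) : R := x * y / (x + y + 1).

(* Main.v *)
Require Import Defs.
From HB Require Import structures.
From mathcomp Require Import all_boot all_order all_algebra.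
From mathcomp Require Import all_classical all_reals all_analysis.
From mathcomp Require Import ring lra measurable_realfun.
Import Order.TTheory GRing.Theory Num.Theory.
Local Open Scope classical_set_scope.
Local Open Scope ring_scope.

Lemma mset_le (d : measure_display) (T : measurableType d) (R : realType)
  (g h : T -> R) : measurable_fun setT g -> measurable_fun setT h ->
  measurable [set t | g t <= h t].
Proof.
move=> mg mh.
have := measurable_fun_ler mg mh measurableT (Y := [set true]) I.
rewrite setTI; congr measurable; apply/seteqP; split => t /=; by [].
Qed.

Lemma key (R : realType) (x y c s q : R) : 0 <= s -> 0 <= q -> c = s ^+ 2 ->
  q ^+ 2 = 1 + c -> c + s * q < x -> c + s * q < y -> c * (x + y + 1) < x * y.
Proof.
move=> hs hq hc hq2 hx hy.
have h1 : s * q < x - c by lra.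
have h2 : s * q < y - c by lra.
have h0 : 0 <= s * q by exact: mulr_ge0.
have h3 : (s * q) * (s * q) < (x - c) * (y - c) by apply: ltr_pM.
have h4 : (s * q) * (s * q) = c * (1 + c) by rewrite -hq2 hc; ring.
have h5 : (x - c) * (y - c) = x * y - c * (x + y + 1) + c * (1 + c) by ring.
rewrite -subr_gt0; lra.
Qed.

Theorem lemma4 (d : measure_display) (T : measurableType d) (R : realType)
  (P : probability T R) (a b : T -> R)
  (ma : measurable_fun setT a) (mb : measurable_fun setT b)
  (ha : forall t, 0 <= a t) (hb : forall t, 0 <= b t)
  (rho : R) (hrho : 0 < rho) (r : R) :
  (P [set t | (fxy (rho * a t) (rho * b t) <= rho `^ (2 * r))%R]
   <= P [set t | (Num.min (a t) (b t) <=
          rho `^ (2 * r - 1) + rho `^ (r - 1) * Num.sqrt (1 + rho `^ (2 * r)))%R])%E.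
Proof.
set c := rho `^ (2 * r).
set K := rho `^ (2 * r - 1) + rho `^ (r - 1) * Num.sqrt (1 + c).
have rho0 : rho != 0 by rewrite gt_eqF.
have den t : 0 < rho * a t + rho * b t + 1.
  have h3 : 0 <= rho * a t by rewrite mulr_ge0 // ltW.
  have h4 : 0 <= rho * b t by rewrite mulr_ge0 // ltW.
  lra.
have EA : [set t | fxy (rho * a t) (rho * b t) <= c] =
  [set t | (rho * a t) * (rho * b t) <= c * (rho * a t + rho * b t + 1)].
  by apply/seteqP; split => t /=; rewrite /fxy ler_pdivrMr.
rewrite EA.
have mA : measurable_fun setT (fun t => rho * a t) by exact: measurable_funM.
have mB : measurable_fun setT (fun t => rho * b t) by exact: measurable_funM.
apply: le_measure; rewrite ?inE.
- apply: mset_le; first exact: measurable_funM.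
  apply: measurable_funM => //; apply: measurable_funD => //.
  exact: measurable_funD.
- apply: mset_le => //; exact: measurable_minr.
move=> t /= hA.
rewrite leNgt; apply/negP => hK.
move: hK; rewrite lt_min => /andP[hKa hKb].
set s := rho `^ r.
set q := Num.sqrt (1 + c).
have hc : c = s ^+ 2.
  by rewrite /c /s -powR_mulrn ?powR_ge0 // -powRrM mulrC.
have hq : q ^+ 2 = 1 + c by rewrite sqr_sqrtr // addr_ge0 // powR_ge0.
have hrK : rho * K = c + s * q.
  rewrite /K mulrDr mulrA.
  have e1 : rho * rho `^ (2 * r - 1) = c.
    rewrite -{1}(powRr1 (ltW hrho)) -powRD ?rho0 ?implybT //; congr (_ `^ _); ring.
  have e2 : rho * rho `^ (r - 1) = s.
    rewrite -{1}(powRr1 (ltW hrho)) -powRD ?rho0 ?implybT //; congr (_ `^ _); ring.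
  by rewrite e1 e2.
have := @key R (rho * a t) (rho * b t) c s q (powR_ge0 rho r) (sqrtr_ge0 (1 + c)) hc hq.
rewrite -hrK !ltr_pM2l //.
move=> /(_ hKa hKb); by rewrite ltNge hA.
Qed.
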